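(* Let $\beta>0$ and let $H$ be a $3$-graph of order $n$. Let $X,Y$ be a partition of $V(H)$. Suppose that there are at most $\beta\binom{|X|}{2}\binom{|Y|}{2}$ copies of $K_4^-$ in $H$ with two vertices in $X$ and two vertices in $Y$. Then \[(|Y|-1)\,e(XXY)+(|X|-1)\,e(XYY)\le 2(1+\beta)\binom{|X|}{2}\binom{|Y|}{2}.\]
   Context: $K_4^-$ is the $3$-graph with $4$ vertices and $3$ edges; the number of copies of $K_4^-$ means the number of $4$-subsets of $V(H)$ spanning at least $3$ edges of $H$. $e(XXY)$ is the number of edges of $H$ with exactly two vertices in $X$ and one in $Y$, and $e(XYY)$ the number with one vertex in $X$ and two in $Y$. *)

(* Defs.v *)
From HB Require Import structures.
From mathcomp Require Import all_boot all_order all_algebra.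
Set Implicit Arguments. Unset Strict Implicit. Unset Printing Implicit Defensive.
Import Order.TTheory GRing.Theory Num.Theory.

Definition is_3graph (T : finType) (E : {set {set T}}) : Prop :=
  forall e, e \in E -> #|e| = 3.

Definition edges_in (T : finType) (E : {set {set T}}) (S : {set T}) : nat :=
  #|[set e in E | e \subset S]|.

(* copies of K4^- with two vertices in X and two in Y: 4-subsets S with
   |S ∩ X| = |S ∩ Y| = 2 spanning at least 3 edges *)
Definition K4m_XXYY (T : finType) (E : {set {set T}}) (X Y : {set T}) : nat :=
  #|[set S : {set T} | [&& #|S :&: X| == 2, #|S :&: Y| == 2 & 3 <= edges_in E S]]|.

Definition eXXY (T : finType) (E : {set {set T}}) (X Y : {set T}) : nat :=
  #|[set e in E | (#|e :&: X| == 2) && (#|e :&: Y| == 1)]|.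
Definition eXYY (T : finType) (E : {set {set T}}) (X Y : {set T}) : nat :=
  #|[set e in E | (#|e :&: X| == 1) && (#|e :&: Y| == 2)]|.

(* Main.v *)
Require Import Defs.
From HB Require Import structures.
From mathcomp Require Import all_boot all_order all_algebra.
From mathcomp Require Import zify ring.
Import Order.TTheory GRing.Theory Num.Theory.
Set Implicit Arguments. Unset Strict Implicit.

Definition Fam (T : finType) (A B : {set T}) : {set {set T}} :=
  [set S : {set T} | (#|S :&: A| == 2) && (#|S :&: B| == 2)].

Lemma card_sub_sum (T : finType) (E : {set {set T}}) (P : pred {set T}) :
  #|[set e in E | P e]| = \sum_(e in E) P e.
Proof.
rewrite -sum1_card (eq_bigl (fun e => (e \in E) && P e)); last by move=> e; rewrite inE.
by rewrite big_mkcondr /=; apply: eq_bigr => e _; case: (P e).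
Qed.

Lemma inject_lb (T : finType) (A B e : {set T}) :
  [disjoint A & B] -> #|e :&: A| = 2 -> #|e :&: B| = 1 ->
  #|B| - 1 <= #|[set S in Fam A B | e \subset S]|.
Proof.
move=> dAB eA eB.
have -> : (#|B| - 1 = #|B :\: e|)%N by rewrite cardsD setIC eB.
have inj : {in B :\: e &, injective (fun y => e :|: [set y])}.
  move=> y1 y2; rewrite !inE => /andP[ny1 _] /andP[ny2 _] h.
  have : y1 \in e :|: [set y2] by rewrite -h !inE eqxx orbT.
  by rewrite !inE (negbTE ny1) /= => /eqP.
rewrite -(card_in_imset inj); apply: subset_leq_card.
apply/subsetP => S /imsetP [y]; rewrite !inE => /andP[ny yB] ->.
rewrite subsetUl andbT.
have yA : y \notin A.
  apply/negP => yA; move: (disjoint_setI0 dAB) => /setP /(_ y).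
  by rewrite !inE yA yB.
rewrite !setIUl.
have -> : [set y] :&: A = set0.
  by apply/setP => z; rewrite !inE; case: eqP => // ->; rewrite (negbTE yA).
have -> : [set y] :&: B = [set y].
  by apply/setP => z; rewrite !inE; case: eqP => // ->; rewrite yB.
rewrite setU0 eA eqxx /= setUC -/(y |: _) cardsU1 eB.
by rewrite inE (negbTE ny).
Qed.

Lemma FamC (T : finType) (A B : {set T}) : Fam A B = Fam B A.
Proof. by apply/setP => S; rewrite !inE andbC. Qed.

Lemma split_set (T : finType) (X Y S : {set T}) :
  X :|: Y = [set: T] -> S = (S :&: X) :|: (S :&: Y).
Proof. by move=> cov; rewrite -setIUr cov setIT. Qed.

Lemma lower_sum (T : finType) (E : {set {set T}}) (X Y : {set T}) :
  [disjoint X & Y] -> is_3graph E ->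
  ((#|Y| - 1) * eXXY E X Y + (#|X| - 1) * eXYY E X Y <=
   \sum_(S in Fam X Y) edges_in E S)%N.
Proof.
move=> dXY h3.
have dYX : [disjoint Y & X] by rewrite disjoint_sym.
rewrite /edges_in.
under eq_bigr => S _ do rewrite card_sub_sum.
rewrite exchange_big /=.
rewrite /eXXY /eXYY !card_sub_sum !big_distrr -big_split /=.
apply: leq_sum => e eE.
rewrite -card_sub_sum.
have [/andP[/eqP a /eqP b]|n1] := boolP ((#|e :&: X| == 2) && (#|e :&: Y| == 1)).
  have -> : ((#|e :&: X| == 1) && (#|e :&: Y| == 2)) = false.
    by apply/negP => /andP[/eqP c _]; move: a; rewrite c.
  rewrite /= muln1 muln0 addn0.
  set C := [set _ in _ | _].
  have -> : C = [set S in Fam X Y | e \subset S] by apply/setP => S; rewrite !inE.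
  exact: inject_lb.
have [/andP[/eqP a /eqP b]|n2] := boolP ((#|e :&: X| == 1) && (#|e :&: Y| == 2)).
  rewrite /= muln0 muln1 add0n.
  set C := [set _ in _ | _].
  have -> : C = [set S in Fam Y X | e \subset S].
    by rewrite FamC.
  exact: inject_lb.
by rewrite !muln0.
Qed.

Lemma edges_le4 (T : finType) (E : {set {set T}}) (X Y S : {set T}) :
  [disjoint X & Y] -> X :|: Y = [set: T] -> is_3graph E ->
  S \in Fam X Y -> (edges_in E S <= 4)%N.
Proof.
move=> dXY cov h3; rewrite inE => /andP[/eqP a /eqP b].
have cS : #|S| = 4%N.
  rewrite (split_set S cov) cardsU a b.
  have -> : S :&: X :&: (S :&: Y) = set0.
    by rewrite setIACA (disjoint_setI0 dXY) setI0.
  by rewrite cards0.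
have -> : 4%N = 'C(#|S|, 3) by rewrite cS.
rewrite /edges_in -(cards_draws S 3); apply: subset_leq_card.
apply/subsetP => e; rewrite !inE => /andP[eE ->]; by rewrite h3.
Qed.

Lemma Fam_card (T : finType) (X Y : {set T}) :
  X :|: Y = [set: T] ->
  (#|Fam X Y| <= 'C(#|X|, 2) * 'C(#|Y|, 2))%N.
Proof.
move=> cov.
rewrite -!cards_draws -cardsX.
have inj : {in Fam X Y &, injective (fun S => (S :&: X, S :&: Y))}.
  move=> S1 S2 _ _ [h1 h2].
  by rewrite (split_set S1 cov) (split_set S2 cov) h1 h2.
rewrite -(card_in_imset inj); apply: subset_leq_card.
apply/subsetP => p /imsetP [S]; rewrite !inE => /andP[a b] -> /=.
by rewrite !subsetIr a b.
Qed.

Lemma key_nat (T : finType) (E : {set {set T}}) (X Y : {set T}) :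
  is_3graph E -> [disjoint X & Y] -> X :|: Y = [set: T] ->
  ((#|Y| - 1) * eXXY E X Y + (#|X| - 1) * eXYY E X Y <=
   2 * ('C(#|X|, 2) * 'C(#|Y|, 2)) + 2 * K4m_XXYY E X Y)%N.
Proof.
move=> h3 dXY cov.
apply: leq_trans (lower_sum dXY h3) _.
have -> : K4m_XXYY E X Y = \sum_(S in Fam X Y) (3 <= edges_in E S).
  rewrite /K4m_XXYY -card_sub_sum; apply: eq_card => S.
  by rewrite !inE andbA.
apply: (@leq_trans (\sum_(S in Fam X Y) (2 + 2 * (3 <= edges_in E S)))%N).
  apply: leq_sum => S hS; have := edges_le4 dXY cov h3 hS.
  by case: ltnP; lia.
rewrite big_split /= -big_distrr /= sum_nat_const.
by rewrite leq_add2r mulnC leq_mul2l Fam_card.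
Qed.

Unset Implicit Arguments. Set Strict Implicit.
Local Open Scope ring_scope.

Theorem proposition3p4 (T : finType) (E : {set {set T}}) (X Y : {set T})
  (beta : rat) :
  0 < beta ->
  is_3graph E ->
  [disjoint X & Y] -> X :|: Y = [set: T] ->
  ((K4m_XXYY E X Y)%:R <= beta * ('C(#|X|, 2) * 'C(#|Y|, 2))%:R) ->
  ((#|Y| - 1) * eXXY E X Y + (#|X| - 1) * eXYY E X Y)%:R
    <= 2 * (1 + beta) * ('C(#|X|, 2) * 'C(#|Y|, 2))%:R.
Proof.
move=> _ h3 dXY cov hK.
apply: le_trans (_ : _ <= (2 * ('C(#|X|, 2) * 'C(#|Y|, 2)) + 2 * K4m_XXYY E X Y)%N%:R) _.
  by rewrite ler_nat key_nat.
rewrite natrD !natrM.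
set N := (_ * _)%:R in hK *.
rewrite -natrM -/N.
have -> : 2 * (1 + beta) * N = 2%:R * N + 2%:R * (beta * N) by rewrite -[2]/(2%:R) ; ring.
by rewrite lerD2l ler_wpM2l.
Qed.
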